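(* Let $m,n$ be positive integers and let $m=p_1^{k_1}\cdots p_r^{k_r}$ be the prime factorization of $m$. If $p_1,\dots,p_r$ are odd and none of them is a Wieferich prime, then $$P(m,n)=\mathrm{lcm}\left(p_1^{k_1-1}P(p_1,n),\dots,p_r^{k_r-1}P(p_r,n)\right).$$
   Context: For positive integers $m,n$, let $\mathbf{Z}_m$ be the integers modulo $m$ and $T:\mathbf{Z}_m^n\to\mathbf{Z}_m^n$, $T(a_0,\dots,a_{n-1})=(a_0+a_1,a_1+a_2,\dots,a_{n-2}+a_{n-1},a_{n-1}+a_0)$. For $\mathbf{a}\in\mathbf{Z}_m^n$ the sequence $(T^k\mathbf{a})_{k\ge0}$ is eventually periodic; its cycle length is the smallest positive integer $P$ such that there is $N$ with $T^{k+P}\mathbf{a}=T^k\mathbf{a}$ for all $k\ge N$. $P(m,n)$ denotes the maximum of the cycle lengths of $(T^k\mathbf{a})_{k\ge0}$ over all $\mathbf{a}\in\mathbf{Z}_m^n$. A prime $p$ is a Wieferich prime if $2^{p-1}\equiv1\pmod{p^2}$. *)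

(* Defs.v *)
From Stdlib Require Import ClassicalEpsilon Lia.
From mathcomp Require Import all_boot zify.
Set Implicit Arguments. Unset Strict Implicit. Unset Printing Implicit Defensive.

(* Z_m represented as 'I_m (written 'I_m.-1.+1, equal to 'I_m for m > 0),
   with arithmetic mod m; this also works for m = 1. *)
Definition Zm (m : nat) : finType := 'I_m.-1.+1.

Definition state (m n : nat) : finType := {ffun 'I_n -> Zm m}.

Definition Tmap (m n : nat) (a : state m n) : state m n :=
  [ffun i : 'I_n => inord ((a i + a (ordS i)) %% m) : Zm m].

Definition is_eventual_period (m n : nat) (a : state m n) (P : nat) : Prop :=
  0 < P /\ exists N, forall k, N <= k -> iter (k + P) (@Tmap m n) a = iter k (@Tmap m n) a.

Definition is_eventual_periodb m n (a : state m n) (P : nat) : bool :=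
  if excluded_middle_informative (is_eventual_period a P) then true else false.

Lemma eventual_period_exists (T : finType) (f : T -> T) (a : T) :
  exists P, 0 < P /\ exists N, forall k, N <= k -> iter (k + P) f a = iter k f a.
Proof.
pose g := fun i : 'I_#|T|.+1 => iter i f a.
have : ~~ injectiveb g.
  apply/negP => /injectiveP inj; move: (leq_card _ inj).
  by rewrite card_ord ltnn.
case/injectivePn => i [j ij eq].
wlog lt : i j ij eq / i < j.
  move=> H; case: (ltngtP i j) => c.
  - exact: (H i j).
  - by apply: (H j i); rewrite // eq_sym.
  - by move/eqP: ij; case; apply: val_inj.
exists (j - i); split; first by rewrite subn_gt0.
exists i => k ki.
have -> : k + (j - i) = (k - i) + j.
  by lia.

rewrite iterD -[in RHS](subnK ki) iterD.
by rewrite /g in eq; rewrite eq.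
Qed.

Lemma is_eventual_periodb_exists m n (a : state m n) :
  exists P, is_eventual_periodb a P.
Proof.
have [P HP] := eventual_period_exists (@Tmap m n) a.
exists P; rewrite /is_eventual_periodb.
by case: excluded_middle_informative.
Qed.

Definition cycle_length m n (a : state m n) : nat :=
  ex_minn (is_eventual_periodb_exists a).

Definition Pmn (m n : nat) : nat := \max_(a : state m n) cycle_length a.

Definition wieferich (p : nat) : Prop := prime p /\ 2 ^ (p - 1) = 1 %[mod p ^ 2].

(* Main.v *)
Require Import Defs.
From Stdlib Require Import ClassicalEpsilon.
From mathcomp Require Import all_boot all_algebra zify.
From mathcomp Require Import ring cyclic.
Set Implicit Arguments. Unset Strict Implicit. Unset Printing Implicit Defensive.
Import GRing.Theory Num.Theory.

(* Proof outline:
   - the Ducci map on Z_m^n is multiplication by u = 1 + X in Z[X]/(X^n - 1, m);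
     Pmn m n is the least Q such that u^N (u^Q - 1) lies in the ideal (X^n-1, m);
   - Chinese remainder splits m into prime powers;
   - for an odd non-Wieferich prime p, the period modulo p^k is p^(k-1) P(p,n),
     by a lifting argument (Em_up), a descent argument (DS) and a base case
     (base) using the Frobenius map and the non-Wieferich hypothesis. *)


Module PA.
Local Open Scope ring_scope.

Definition inI (n q : nat) (f : {poly int}) :=
  exists d g, f = d * ('X^n - 1) + q%:R * g.

Lemma inI0 n q : inI n q 0.
Proof. by exists 0, 0; rewrite !mul0r mulr0 addr0. Qed.

Lemma inID n q f g : inI n q f -> inI n q g -> inI n q (f + g).
Proof.
move=> [d1 [g1 ->]] [d2 [g2 ->]]; exists (d1 + d2), (g1 + g2); ring.
Qed.

Lemma inIN n q f : inI n q f -> inI n q (- f).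
Proof. move=> [d1 [g1 ->]]; exists (- d1), (- g1); ring. Qed.

Lemma inIB n q f g : inI n q f -> inI n q g -> inI n q (f - g).
Proof. by move=> ? ?; apply: inID => //; apply: inIN. Qed.

Lemma inIMr n q f h : inI n q f -> inI n q (f * h).
Proof. move=> [d1 [g1 ->]]; exists (d1 * h), (g1 * h); ring. Qed.

Lemma inIMl n q f h : inI n q f -> inI n q (h * f).
Proof. by move=> H; rewrite mulrC; apply: inIMr. Qed.

Lemma inI_nat n q g : inI n q (q%:R * g).
Proof. by exists 0, g; rewrite mul0r add0r. Qed.

Lemma inI_Phi n q h : inI n q (h * ('X^n - 1)).
Proof. by exists h, 0; rewrite mulr0 addr0. Qed.

Lemma inI_dvd n q d f : (d %| q)%N -> inI n q f -> inI n d f.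
Proof.
move=> /dvdnP [k ->] [d1 [g1 ->]]; exists d1, (k%:R * g1).
by rewrite natrM mulrA [_ * d%:R]mulrC.
Qed.

Lemma inI_mulq n a b f g : inI n a f -> inI n b g -> inI n (a * b) (f * g).
Proof.
move=> [d1 [g1 ->]] [d2 [g2 ->]].
exists (d1 * (d2 * ('X^n - 1) + b%:R * g2) + a%:R * g1 * d2), (g1 * g2).
rewrite natrM; ring.
Qed.

Lemma inI1 n : inI n 1 1.
Proof. by exists 0, 1; rewrite mul0r add0r mulr1. Qed.

Lemma inI_scale n q c f : inI n q f -> inI n (c * q) (c%:R * f).
Proof. by move=> H; apply: inI_mulq => //; rewrite -[c%:R]mulr1; apply: inI_nat. Qed.

Lemma inI_exp n q f k : inI n q f -> inI n (q ^ k) (f ^+ k).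
Proof.
move=> H; elim: k => [|k IH]; first by rewrite expr0 expn0; apply: inI1.
by rewrite exprS expnS; apply: inI_mulq.
Qed.

Lemma inI_sum n q k (F : nat -> {poly int}) :
  (forall i, (i < k)%N -> inI n q (F i)) -> inI n q (\sum_(i < k) F i).
Proof.
move=> H; elim/big_ind: _ => //; first exact: inI0.
  by move=> x y; apply: inID.
by move=> i _; apply: H.
Qed.

Lemma Phi_dvd n k : (n %| k)%N -> exists h : {poly int}, 'X^k - 1 = h * ('X^n - 1).
Proof.
move=> /dvdnP [t ->]; exists (\sum_(i < t) ('X^n) ^+ i).
by rewrite mulnC exprM subrX1 mulrC.
Qed.

Lemma inI_fold n n0 q f : (n0 %| n)%N -> inI n q f -> inI n0 q f.
Proof.
move=> /Phi_dvd [h E] [d [g ->]]; exists (d * h), g; rewrite E; ring.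
Qed.

Lemma inI_XB n q a b : (b <= a)%N -> (n %| a - b)%N -> inI n q ('X^a - 'X^b).
Proof.
move=> le /Phi_dvd [h E]; exists ('X^b * h), 0.
by rewrite -(subnK le) exprD -mulrA -E; ring.
Qed.

End PA.
Import PA.

Module PB.
Local Open Scope ring_scope.

Definition md n (f : {poly int}) := Pdiv.CommonRing.rmodp f ('X^n - 1).

Lemma Phi_monic n : (0 < n)%N -> ('X^n - 1 : {poly int}) \is monic.
Proof. exact: monic_Xn_sub_1. Qed.

Lemma size_Phi n : (0 < n)%N -> size ('X^n - 1 : {poly int}) = n.+1.
Proof. by move=> n0; rewrite -polyC1 size_XnsubC. Qed.

Lemma md_size n f : (0 < n)%N -> (size (md n f) <= n)%N.
Proof.
move=> n0; rewrite -ltnS -(size_Phi n0) Pdiv.CommonRing.ltn_rmodp.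
by rewrite -size_poly_eq0 size_Phi.
Qed.

Lemma md_small n (f : {poly int}) : (size f <= n)%N -> md n f = f.
Proof.
move=> s; case: n s => [|n] s.
  by move: s; rewrite leqn0 size_poly_eq0 => /eqP ->; rewrite /md Pdiv.CommonRing.rmod0p.
by apply: Pdiv.CommonRing.rmodp_small; rewrite size_Phi.
Qed.

Lemma natP (q : nat) : (q%:R : {poly int}) = (q%:Z)%:P.
Proof. by rewrite -polyC_natr natz. Qed.

Lemma inI_md n q f : (0 < n)%N ->
  inI n q f <-> forall j, (q%:Z %| (md n f)`_j)%Z.
Proof.
move=> n0; have mo := Phi_monic n0; split.
  move=> [d [g ->]] j; rewrite /md Pdiv.RingMonic.rmodpD //.
  rewrite Pdiv.RingMonic.rmodp_mull // add0r natP mul_polyC.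
  by rewrite Pdiv.RingMonic.rmodpZ // coefZ dvdz_mulr.
move=> H; exists (Pdiv.CommonRing.rdivp f ('X^n - 1)),
  (\poly_(j < n) (((md n f)`_j) %/ q%:Z)%Z).
rewrite {1}(Pdiv.RingMonic.rdivp_eq mo f); congr (_ + _).
apply/polyP => j; rewrite natP mul_polyC coefZ coef_poly.
case: ifP => jn; first by rewrite mulrC divzK.
rewrite mulr0; move: (md_size f n0) => /leq_sizeP S; rewrite -/(md n f) S //.
by rewrite leqNgt jn.
Qed.

Lemma inI_div n c q f : (0 < n)%N -> (0 < c)%N ->
  inI n (c * q) (c%:R * f) -> inI n q f.
Proof.
move=> n0 c0 /(inI_md _ _ n0) H; apply/(inI_md _ _ n0) => j.
move: (H j); rewrite /md natP mul_polyC Pdiv.RingMonic.rmodpZ ?Phi_monic //.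
by rewrite coefZ PoszM dvdz_mul2l // eqz_nat -lt0n.
Qed.

Lemma inI_coef n q (f : {poly int}) j : (0 < n)%N -> (size f <= n)%N -> inI n q f ->
  (q%:Z %| f`_j)%Z.
Proof. by move=> n0 s /(inI_md _ _ n0) /(_ j); rewrite md_small. Qed.

End PB.
Import PB.

Module PC.
Local Open Scope ring_scope.

Lemma mdX n (f : {poly int}) k : (0 < n)%N -> (k < n)%N ->
  (md n (f * 'X))`_k = (md n f)`_(if k == 0%N then n.-1 else k.-1).
Proof.
move=> n0 kn; have mo := Phi_monic n0.
set r := md n f; set c := r`_n.-1.
have E : md n (f * 'X) = r * 'X - c%:P * ('X^n - 1).
  rewrite /md -Pdiv.RingMonic.rmodp_mulml // -/r.
  rewrite {1}(_ : r * 'X = c%:P * ('X^n - 1) + (r * 'X - c%:P * ('X^n - 1))); last by ring.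
  rewrite Pdiv.RingMonic.rmodp_addl_mul_small // size_Phi // ltnS.
  apply/leq_sizeP => j jn; rewrite coefB coefMX coefCM coefB coefXn coef1.
  have Sr := md_size f n0; move/leq_sizeP: Sr => Sr.
  case: (ltngtP n j) => [nj|nj|<-]; last 2 first.
  - lia.
  - rewrite (_ : (n == 0%N) = false) /=; last by lia.
    by rewrite subr0 mulr1 subrr.
  rewrite (_ : (j == 0%N) = false) /=; last by lia.
  by rewrite /r Sr ?mulr0 ?subr0 //; lia.
rewrite E coefB coefMX coefCM coefB coefXn coef1.
case: eqP => [->|k0]; first by rewrite (_ : (0 == n)%N = false) /=; [ring | lia].
rewrite (_ : (k == n)%N = false) /=; last by lia.
by rewrite subrr mulr0 subr0.
Qed.

Definition idx n (i : 'I_n) : nat := ((n - i) %% n)%N.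

Lemma idx_lt n (i : 'I_n) : (idx i < n)%N.
Proof. rewrite /idx ltn_pmod //; case: i => i /=; lia. Qed.

Lemma idx_ordS n (i : 'I_n) :
  (if idx i == 0%N then n.-1 else (idx i).-1) = idx (ordS i).
Proof.
rewrite /idx /=; case: i => i /= lt.
case: i lt => [|i] lt.
  rewrite subn0 modnn /=; case: n lt => [//|[|n]] _ //.
  by rewrite modn_small //= subn1 modn_small.
rewrite (modn_small (m := (n - i.+1)%N)); last by lia.
rewrite (_ : (n - i.+1 == 0)%N = false); last by lia.
case: (ltngtP i.+2 n) => c.
- by rewrite (modn_small (m := i.+2)) // modn_small; lia.
- lia.
- by rewrite -c modnn subn0 modnn; lia.
Qed.

Lemma idx_inj n (i j : 'I_n) : idx i = idx j -> i = j.
Proof.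
rewrite /idx; case: i => i ip; case: j => j jp /= E; apply: val_inj => /=.
case: i ip E => [|i] ip; case: j jp => [|j] jp //=.
- rewrite subn0 modnn modn_small; lia.
- rewrite subn0 modnn modn_small; lia.
- rewrite !modn_small; lia.
Qed.

Definition red m n (f : {poly int}) : state m n :=
  [ffun i : 'I_n => inord (absz (((md n f)`_(idx i)) %% m%:Z)%Z) : Zm m].

Lemma absmod_lt (m : nat) (z : int) : (0 < m)%N -> (absz (z %% m%:Z)%Z < m)%N.
Proof.
move=> m0; rewrite -ltz_nat gez0_abs ?modz_ge0 ?ltz_pmod //.
by rewrite eqz_nat -lt0n.
Qed.

Lemma val_red m n f i : (0 < m)%N ->
  val (red m n f i) = absz (((md n f)`_(idx i)) %% m%:Z)%Z.
Proof.
move=> m0; rewrite ffunE; apply: inordK; rewrite prednK //; exact: absmod_lt.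
Qed.

Lemma absmod_eq (m : nat) (x y : int) : (0 < m)%N ->
  (absz (x %% m%:Z)%Z = absz (y %% m%:Z)%Z) <-> (m%:Z %| x - y)%Z.
Proof.
move=> m0; have m0' : m%:Z != 0 by rewrite eqz_nat -lt0n.
rewrite -eqz_mod_dvd; split.
  by move=> E; apply/eqP; rewrite -[LHS]gez0_abs ?modz_ge0 // E gez0_abs ?modz_ge0.
by move/eqP=> ->.
Qed.

Lemma red_eq m n f g : (0 < m)%N -> (0 < n)%N ->
  red m n f = red m n g <-> inI n m (f - g).
Proof.
move=> m0 n0; have mo := Phi_monic n0.
rewrite inI_md //; split.
  move=> E j; rewrite /md Pdiv.RingMonic.rmodpB // coefB.
  case: (ltnP j n) => jn; last first.
    have S1 := md_size f n0; have S2 := md_size g n0.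
    move/leq_sizeP: S1 => S1; move/leq_sizeP: S2 => S2.
    by rewrite -!/(md _ _) S1 // S2 // subrr dvdz0.
  pose i : 'I_n := Ordinal (ltn_pmod (n - j) n0).
  have ij : idx i = j.
    rewrite /idx /=; case: j jn {i} => [|j] jn.
    - by rewrite subn0 modnn subn0 modnn.
    - rewrite (modn_small (m := (n - j.+1)%N)); last lia.
      rewrite modn_small; lia.
  move: (congr1 (fun a : state m n => nat_of_ord (a i)) E) => /=; rewrite !val_red // ij.
  by move/absmod_eq; apply.
move=> H; apply/ffunP => i; apply: val_inj; rewrite !val_red //.
apply/absmod_eq => //; move: (H (idx i)).
by rewrite /md Pdiv.RingMonic.rmodpB // coefB.
Qed.

Lemma absmodD (m : nat) (x y : int) : (0 < m)%N ->
  absz ((x + y) %% m%:Z)%Z =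
  ((absz (x %% m%:Z)%Z + absz (y %% m%:Z)%Z) %% m)%N.
Proof.
move=> m0; have m0' : m%:Z != 0 by rewrite eqz_nat -lt0n.
apply/eqP; rewrite -eqz_nat gez0_abs ?modz_ge0 // -modz_nat PoszD.
by rewrite !gez0_abs ?modz_ge0 // modzDm.
Qed.

Lemma val_inord_Zm m x : (0 < m)%N -> (x < m)%N -> val (inord x : Zm m) = x.
Proof. by move=> m0 xm; apply: inordK; rewrite prednK. Qed.

Lemma red_T m n f : (0 < m)%N -> (0 < n)%N ->
  Tmap (red m n f) = red m n (f * ('X + 1)).
Proof.
move=> m0 n0; have mo := Phi_monic n0.
apply/ffunP => i; apply: val_inj; rewrite val_red // ffunE.
rewrite val_inord_Zm //; last by rewrite ltn_pmod.
rewrite !val_red // mulrDr mulr1 /md Pdiv.RingMonic.rmodpD // coefD.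
rewrite -!/(md _ _) mdX ?idx_lt // idx_ordS absmodD //.
by rewrite addnC.
Qed.

Lemma iter_red m n f k : (0 < m)%N -> (0 < n)%N ->
  iter k (@Tmap m n) (red m n f) = red m n (f * ('X + 1) ^+ k).
Proof.
move=> m0 n0; elim: k => [|k IH]; first by rewrite expr0 mulr1.
by rewrite iterS IH red_T // exprSr mulrA.
Qed.

Definition lift m n (a : state m n) : {poly int} :=
  \sum_(i : 'I_n) (val (a i))%:Z *: 'X^(idx i).

Lemma red_lift m n (a : state m n) : (0 < m)%N -> (0 < n)%N ->
  red m n (lift a) = a.
Proof.
move=> m0 n0; have mo := Phi_monic n0.
have C : forall j, (lift a)`_j = \sum_(i : 'I_n) (val (a i))%:Z * (j == idx i)%:R.
  by move=> j; rewrite coef_sum; apply: eq_bigr => i _; rewrite coefZ coefXn.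
have S : (size (lift a) <= n)%N.
  apply/leq_sizeP => j jn; rewrite C big1 // => i _.
  by rewrite (_ : (j == idx i) = false) ?mulr0 //; have := idx_lt i; lia.
apply/ffunP => i; apply: val_inj; rewrite val_red // md_small // C.
rewrite (bigD1 i) //= eqxx mulr1 big1 ?addr0; last first.
  move=> j ji; rewrite (_ : (idx i == idx j) = false) ?mulr0 //.
  by apply/negbTE; apply: contra ji => /eqP /idx_inj ->.
rewrite modz_nat absz_nat modn_small //.
by case: (a i) => /= x; rewrite prednK.
Qed.

End PC.
Import PC.

Module PD.
Local Open Scope ring_scope.

Local Open Scope nat_scope.
Lemma ep_mul m n (a : state m n) P t :
  is_eventual_period a P -> (0 < t)%N -> is_eventual_period a (P * t).
Proof.
move=> [P0 [N HN]] t0; split; first by rewrite muln_gt0 P0.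
exists N => k kN; elim: t {t0} => [|t IH]; first by rewrite muln0 addn0.
by rewrite mulnS addnCA addnC HN // (leq_trans kN (leq_addr _ _)).
Qed.

Lemma ep_sub m n (a : state m n) P Q :
  is_eventual_period a P -> is_eventual_period a Q -> (P < Q)%N ->
  is_eventual_period a (Q - P).
Proof.
move=> [P0 [N1 H1]] [Q0 [N2 H2]] PQ; split; first by rewrite subn_gt0.
exists (N1 + N2) => k kN.
rewrite -H1; last by lia.
by rewrite -addnA subnK ?H2 //; lia.
Qed.

Lemma cl_spec m n (a : state m n) :
  is_eventual_period a (cycle_length a) /\
  forall Q, is_eventual_period a Q -> (cycle_length a <= Q)%N.
Proof.
rewrite /cycle_length; case: ex_minnP => c Hc Hmin; split.
  by move: Hc; rewrite /is_eventual_periodb; case: excluded_middle_informative.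
move=> Q HQ; apply: Hmin; rewrite /is_eventual_periodb.
by case: excluded_middle_informative.
Qed.

Lemma ep_dvd m n (a : state m n) Q : (0 < Q)%N ->
  is_eventual_period a Q <-> (cycle_length a %| Q)%N.
Proof.
move=> Q0; have [Hc Hmin] := cl_spec a; have c0 := proj1 Hc.
set c := cycle_length a in Hc Hmin c0 *; split; last first.
  move/dvdnP => [t Qt]; rewrite Qt mulnC; apply: ep_mul => //.
  by move: Q0; rewrite Qt; case: (t) => //.
move=> HQ; apply/dvdnP; exists (Q %/ c).
case: (posnP (Q %% c)) => r0.
  by rewrite {1}(divn_eq Q c) r0 addn0.
exfalso; case: (posnP (Q %/ c)) => d0.
  have : (Q < c)%N by rewrite {1}(divn_eq Q c) d0 mul0n add0n ltn_pmod.
  by rewrite ltnNge Hmin.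
have : is_eventual_period a (Q - Q %/ c * c).
  apply: ep_sub => //; first by rewrite mulnC; apply: ep_mul.
  by rewrite {2}(divn_eq Q c); lia.
move/Hmin; rewrite {1}(divn_eq Q c) addKn.
by rewrite leqNgt ltn_pmod.
Qed.

Local Open Scope ring_scope.
Definition u : {poly int} := 'X + 1.

Definition Em n m Q := exists N, inI n m (u ^+ N * (u ^+ Q - 1)).

Lemma Em_ep m n Q : (0 < m)%N -> (0 < n)%N -> (0 < Q)%N -> Em n m Q ->
  forall a : state m n, is_eventual_period a Q.
Proof.
move=> m0 n0 Q0 [N HN] a; split=> //; exists N => k kN.
rewrite -(red_lift a) // !iter_red // red_eq //.
have -> : lift a * ('X + 1) ^+ (k + Q) - lift a * ('X + 1) ^+ k =
   (lift a * u ^+ (k - N)) * (u ^+ N * (u ^+ Q - 1)).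
  rewrite /u -(subnK kN); set K := (k - N)%N.
  rewrite addnK !exprD; ring.
exact: inIMl.
Qed.

Lemma ep_Em m n Q : (0 < m)%N -> (0 < n)%N ->
  is_eventual_period (red m n 1) Q -> Em n m Q.
Proof.
move=> m0 n0 [Q0 [N HN]]; exists N.
move: (HN N (leqnn N)); rewrite !iter_red // red_eq // !mul1r.
by rewrite exprD /u; congr inI; ring.
Qed.

Lemma Pmn_spec m n : (0 < m)%N -> (0 < n)%N ->
  (0 < Pmn m n)%N /\ forall Q, (0 < Q)%N -> (Em n m Q <-> (Pmn m n %| Q)%N).
Proof.
move=> m0 n0; set d := red m n 1.
have [Hc _] := cl_spec d; have c0 := proj1 Hc.
have Ec := ep_Em m0 n0 Hc.
have Pe : Pmn m n = cycle_length d.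
  apply/eqP; rewrite eqn_leq leq_bigmax andbT; apply/bigmax_leqP => a _.
  apply: dvdn_leq => //; apply/ep_dvd => //; exact: Em_ep.
rewrite Pe; split => // Q Q0; split.
  by move=> E; apply/ep_dvd => //; apply: Em_ep.
by move/(ep_dvd d Q0); apply: ep_Em.
Qed.

End PD.
Import PD.

Module PE.
Local Open Scope ring_scope.

Lemma inI_sumo n q k (F : 'I_k -> {poly int}) :
  (forall i, inI n q (F i)) -> inI n q (\sum_(i < k) F i).
Proof.
move=> H; elim/big_ind: _ => //; first exact: inI0.
by move=> x y; apply: inID.
Qed.

Lemma inI_powB n q (A B : {poly int}) k :
  inI n q (A - B) -> inI n q (A ^+ k - B ^+ k).
Proof. by move=> H; rewrite subrXX; apply: inIMr. Qed.

Lemma inI_natmul n q f k : inI n q f -> inI n q (f *+ k).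
Proof. by move=> H; rewrite -mulr_natl; apply: inIMl. Qed.

Lemma inI_dvdmul n p f k : (p %| k)%N -> inI n p (f *+ k).
Proof.
move=> /dvdnP [c ->]; rewrite mulrnA -mulr_natl; exact: inI_nat.
Qed.

Lemma LL n q p (A B : {poly int}) : (p %| q)%N ->
  inI n q (A - B) -> inI n (q * p) (A ^+ p - B ^+ p).
Proof.
move=> pq H; rewrite subrXX; apply: inI_mulq => //.
have -> : \sum_(i < p) A ^+ (p.-1 - i) * B ^+ i =
   \sum_(i < p) (A ^+ (p.-1 - i) - B ^+ (p.-1 - i)) * B ^+ i +
   \sum_(i < p) B ^+ p.-1.
  rewrite -big_split /=; apply: eq_bigr => i _.
  rewrite mulrBl -exprD subnK ?subrK //; case: i => i /= ip; lia.
apply: inID.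
  apply: inI_sumo => i; apply: inIMr; apply: inI_powB.
  exact: (inI_dvd pq).
by rewrite sumr_const card_ord; apply: inI_dvdmul.
Qed.

Lemma Bin n p (Y : {poly int}) : prime p ->
  inI n p ((Y + 1) ^+ p - (Y ^+ p + 1)).
Proof.
move=> pp; case: p pp => [//|p] pp.
rewrite exprD1n big_ord_recr big_ord_recl /= bin0 binn !mulr1n expr0.
have -> : 1 + \sum_(i < p) Y ^+ (bump 0 i) *+ 'C(p.+1, bump 0 i) + Y ^+ p.+1 -
   (Y ^+ p.+1 + 1) = \sum_(i < p) Y ^+ (bump 0 i) *+ 'C(p.+1, bump 0 i) by ring.
apply: inI_sumo => i; apply: inI_dvdmul; apply: prime_dvd_bin => //.
by rewrite /bump /=; case: i => i /= ip; lia.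
Qed.

Lemma Frob n p j : prime p ->
  inI n p (('X + 1) ^+ (p ^ j) - ('X^(p ^ j) + 1)).
Proof.
move=> pp; elim: j => [|j IH].
  by rewrite expn0 expr1 subrr; apply: inI0.
have -> : ('X + 1 : {poly int}) ^+ (p ^ j.+1) - ('X^(p ^ j.+1) + 1) =
  ((('X + 1) ^+ (p ^ j)) ^+ p - ('X^(p ^ j) + 1) ^+ p) +
  ((('X^(p ^ j) + 1) ^+ p) - (('X^(p ^ j)) ^+ p + 1)).
  by rewrite -!exprM -expnSr; ring.
apply: inID; first exact: inI_powB.
exact: Bin.
Qed.

Lemma Em_mono n q N N' y : inI n q (u ^+ N * y) -> (N <= N')%N ->
  inI n q (u ^+ N' * y).
Proof.
move=> H le; rewrite -(subnK le) exprD -mulrA; exact: inIMl.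
Qed.

Lemma Em_dvd n q d Q : Em n q Q -> (d %| q)%N -> Em n d Q.
Proof. by move=> [N H] dq; exists N; apply: (inI_dvd dq). Qed.

Lemma Em_mulQ n q Q t : Em n q Q -> Em n q (Q * t).
Proof.
move=> [N H]; exists N; rewrite exprM subrX1 mulrA; exact: inIMr.
Qed.

Lemma Em_up n p j R : (0 < j)%N -> Em n (p ^ j) R -> Em n (p ^ j.+1) (p * R).
Proof.
move=> j0 [N H]; exists (p * N)%N.
have -> : u ^+ (p * N) * (u ^+ (p * R) - 1) = (u ^+ (N + R)) ^+ p - (u ^+ N) ^+ p.
  by rewrite -!exprM mulnDl exprD mulnC (mulnC R) ; ring.
rewrite expnSr; apply: LL; first by rewrite -{1}(expn1 p) dvdn_exp2l.
by have -> : u ^+ (N + R) - u ^+ N = u ^+ N * (u ^+ R - 1) by rewrite exprD; ring.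
Qed.

End PE.
Import PE.

Module PF.
Local Open Scope ring_scope.

Lemma inI_dvdmul2 n q p f C : inI n q f -> (p %| C)%N -> inI n (p * q) (f *+ C).
Proof.
move=> H /dvdnP [c ->]; rewrite mulrnA -mulr_natl; apply: inI_scale.
exact: inI_natmul.
Qed.

Lemma tail_term n p k l (a Z : {poly int}) : prime p -> (2 < p)%N -> (0 < k)%N ->
  (2 <= l <= p)%N -> inI n (p ^ k) Z ->
  inI n (p ^ (k + 2)) (a ^+ (p - l) * Z ^+ l *+ 'C(p, l)).
Proof.
move=> pp p2 k0 /andP [l2 lp] HZ.
have HZl : inI n (p ^ (k * l)) (a ^+ (p - l) * Z ^+ l).
  by apply: inIMl; rewrite expnM; apply: inI_exp.
case: (ltngtP l p) lp => // [lp' _ | E _]; last first.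
  move: HZl; rewrite E => HZl.
  apply: inI_natmul; apply: (inI_dvd _ HZl).
  by rewrite dvdn_exp2l //; nia.
  apply: (@inI_dvd _ (p * p ^ (k * l))).
    by rewrite -expnS dvdn_exp2l //; nia.
by apply: inI_dvdmul2 => //; apply: prime_dvd_bin => //; lia.
Qed.

Lemma tail n p k (a Z : {poly int}) : prime p -> (2 < p)%N -> (0 < k)%N ->
  inI n (p ^ k) Z ->
  inI n (p ^ (k + 2)) ((a + Z) ^+ p - a ^+ p - (a ^+ p.-1 * Z) *+ p).
Proof.
move=> pp p2 k0 HZ.
case: p pp p2 HZ => [//|[//|p]] pp p2 HZ.
rewrite exprDn big_ord_recl big_ord_recl /=.
rewrite subn0 expr0 mulr1 bin0 mulr1n expr1 bin1.
set S := \sum_(i < p.+1) _.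
have -> : a ^+ p.+2 + (a ^+ (p.+2 - bump 0 0) * Z *+ p.+2 + S) - a ^+ p.+2 -
  a ^+ p.+1 * Z *+ p.+2 = S.
  by rewrite /bump /= subSS subn0; ring.
apply: inI_sumo => i; apply: tail_term => //.
by rewrite /bump /=; case: i => i /= ip; lia.
Qed.

Lemma DS n p k R : (0 < n)%N -> prime p -> (2 < p)%N -> (0 < k)%N ->
  Em n (p ^ k.+2) (p * R) -> Em n (p ^ k) R -> Em n (p ^ k.+1) R.
Proof.
move=> n0 pp p2 k0 [N1 H1] [N2 H2].
set a := u ^+ N2; set Z := a * (u ^+ R - 1).
have T := tail a pp p2 k0 H2.
have E1 : (a + Z) ^+ p - a ^+ p = u ^+ (p * N2) * (u ^+ (p * R) - 1).
  have -> : a + Z = u ^+ (N2 + R) by rewrite /Z /a exprD; ring.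
  rewrite /a -!exprM mulnDl exprD (mulnC N2 p) (mulnC R p); ring.
have H1' : inI n (p ^ (k + 2)) (u ^+ N1 * ((a + Z) ^+ p - a ^+ p)).
  rewrite E1 addn2 mulrA (mulrC (u ^+ N1)) -mulrA; exact: inIMl.
have H3 : inI n (p ^ (k + 2)) (u ^+ N1 * ((a ^+ p.-1 * Z) *+ p)).
  have -> : u ^+ N1 * ((a ^+ p.-1 * Z) *+ p) = u ^+ N1 * ((a + Z) ^+ p - a ^+ p)
     - u ^+ N1 * ((a + Z) ^+ p - a ^+ p - (a ^+ p.-1 * Z) *+ p) by ring.
  by apply: inIB => //; apply: inIMl.
move: H2 => [d [W EZ0]].
have EZ : Z = d * ('X^n - 1) + (p ^ k)%:R * W by rewrite /Z /a EZ0.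
set V := u ^+ N1 * a ^+ p.-1 * W.
have HV : inI n p V.
  apply: (@inI_div n (p ^ k.+1)) => //; first by rewrite expn_gt0 prime_gt0.
  rewrite -expnSr -addn2.
  have -> : (p ^ k.+1)%:R * V = u ^+ N1 * ((a ^+ p.-1 * Z) *+ p) -
     (u ^+ N1 * a ^+ p.-1 * d * p%:R) * ('X^n - 1).
    by rewrite EZ /V expnSr natrM -mulr_natr; ring.
  by apply: inIB => //; apply: inI_Phi.
exists (N1 + p * N2)%N.
have -> : u ^+ (N1 + p * N2) * (u ^+ R - 1) = u ^+ N1 * a ^+ p.-1 * Z.
  rewrite /Z /a -exprM exprD; case: (p) pp => [//|p'] _ /=.
  by rewrite mulSn exprD (mulnC p' N2); ring.
rewrite EZ mulrDr.
apply: inID; first by rewrite mulrA; apply: inI_Phi.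
have -> : u ^+ N1 * a ^+ p.-1 * ((p ^ k)%:R * W) = (p ^ k)%:R * V by rewrite /V; ring.
by rewrite expnSr; apply: inI_scale.
Qed.

End PF.
Import PF.

Module PG.

Lemma exp_gcd a M x y : a ^ x = 1 %[mod M] -> a ^ y = 1 %[mod M] ->
  a ^ (gcdn x y) = 1 %[mod M].
Proof.
elim/ltn_ind: y x => y IH x Hx Hy.
case: (posnP y) => [y0|yp]; first by rewrite y0 gcdn0.
rewrite gcdnC -gcdn_modr; apply: IH => //; first by rewrite ltn_pmod.
have Hq : a ^ (x %/ y * y) = 1 %[mod M].
  by rewrite mulnC expnM -modnXm Hy modnXm exp1n.
move: Hx; rewrite {1}(divn_eq x y) expnD -modnMml Hq modnMml mul1n.
by [].
Qed.

Lemma nonwief p b : prime p -> odd p -> ~ wieferich p -> ~~ (p %| b) ->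
  2 ^ b = 1 %[mod p ^ 2] -> False.
Proof.
move=> pp op nw pb Hb; apply: nw; split => //.
have p2 : coprime 2 (p ^ 2) by rewrite coprimeXr // coprime2n.
have E := Euler_exp_totient p2; rewrite totient_pfactor // expn1 in E.
have G := exp_gcd Hb E.
rewrite Gauss_gcdl in G; last by rewrite coprime_sym prime_coprime.
have /dvdnP [t ->] : (gcdn b p.-1 %| p - 1)%N by rewrite subn1 dvdn_gcdr.
by rewrite mulnC expnM -modnXm G modnXm exp1n.
Qed.

Local Open Scope ring_scope.

Definition Hs p (Y : {poly int}) := \sum_(i < p.-1) Y ^+ i.+1 *+ 'C(p, i.+1).

Lemma Hs_expl p (Y : {poly int}) : (1 < p)%N ->
  (Y + 1) ^+ p - (Y ^+ p + 1) = Hs p Y.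
Proof.
case: p => [//|p] _; rewrite /Hs /=.
rewrite exprD1n big_ord_recr big_ord_recl /= bin0 binn !mulr1n expr0.
by rewrite /bump /=; ring.
Qed.

Lemma Hs_coef p t j : (0 < t)%N ->
  (Hs p ('X^t))`_j = \sum_(i < p.-1) ((j == t * i.+1)%N%:R *+ 'C(p, i.+1)).
Proof.
move=> t0; rewrite /Hs coef_sum; apply: eq_bigr => i _.
by rewrite coefMn -exprM coefXn.
Qed.

Lemma Hs_coef0 p t : (0 < t)%N -> (Hs p ('X^t))`_0 = 0.
Proof.
move=> t0; rewrite Hs_coef // big1 // => i _.
by rewrite (_ : (0 == t * i.+1)%N = false) ?mul0rn //; nia.
Qed.

Lemma Hs_coeft p t : (0 < t)%N -> (1 < p)%N -> (Hs p ('X^t))`_t = p%:R.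
Proof.
move=> t0 p1; rewrite Hs_coef //; case: p p1 => [//|[//|p]] _ /=.
rewrite big_ord_recl /= muln1 eqxx bin1 big1 ?addr0 //.
move=> i _; rewrite (_ : (t == t * (bump 0 i).+1)%N = false) ?mul0rn //.
by rewrite /bump /=; nia.
Qed.

Lemma Hs_coefbig p t j : (0 < t)%N -> (t * p <= j)%N -> (Hs p ('X^t))`_j = 0.
Proof.
move=> t0 tj; rewrite Hs_coef // big1 // => i _.
rewrite (_ : (j == t * i.+1)%N = false) ?mul0rn //.
case: i => i /= ip; nia.
Qed.

Lemma Wlem n q (H : {poly int}) k : inI n q H ->
  inI n (q * q) ((2%:R + H) ^+ k - ((2 ^ k)%N%:R + (k * 2 ^ k.-1)%N%:R * H)).
Proof.
move=> HH; elim: k => [|k IH].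
  by rewrite expr0 expn0 mul0n mul0r addr0 subrr; apply: inI0.
have nat_id : (2 ^ k + 2 * (k * 2 ^ k.-1) = k.+1 * 2 ^ k)%N.
  by case: k {IH} => [|k] //=; rewrite expnS; ring.
have -> : (2%:R + H) ^+ k.+1 - ((2 ^ k.+1)%N%:R + (k.+1 * 2 ^ k.+1.-1)%N%:R * H) =
  ((2%:R + H) ^+ k - ((2 ^ k)%N%:R + (k * 2 ^ k.-1)%N%:R * H)) * (2%:R + H)
  + (k * 2 ^ k.-1)%N%:R * (H * H).
  rewrite /= -nat_id expnS !natrD !natrM exprSr; ring.
apply: inID; first by apply: inIMr.
by apply: inIMl; apply: inI_mulq.
Qed.

Lemma copz2 p k : odd p -> coprimez p%:Z (2 ^+ k).
Proof.
move=> op; rewrite coprimezXr // coprimezE /= coprime_sym.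
by rewrite (_ : (1 + 1 = 2)%N) // coprime2n.
Qed.

Lemma int_final p b M : prime p -> odd p -> (0 < M)%N ->
  ((p * p)%N%:Z %| (2 ^ (M + b))%N%:R - (2 ^ M)%N%:R)%Z ->
  ((p * p)%N%:Z %| p%:R *+ ((M + b) * 2 ^ (M + b).-1) - p%:R *+ (M * 2 ^ M.-1))%Z ->
  (p %| b)%N.
Proof.
move=> pp op; case: M => [//|M] _ H1 H2.
have pp' : (p%:Z %| (p * p)%N%:Z)%Z by rewrite PoszM dvdz_mulr.
have p0 : p%:Z != 0 by rewrite eqz_nat -lt0n prime_gt0.
have A : (p%:Z %| 2 ^+ b - 1)%Z.
  have := dvdz_trans pp' H1.
  have -> : (2 ^ (M.+1 + b))%N%:R - (2 ^ M.+1)%N%:R = (2 ^+ M.+1 : int) * (2 ^+ b - 1).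
    by rewrite !natrX exprD; ring.
  by rewrite Gauss_dvdzr // copz2.
have B : (p%:Z %| 2 ^+ M * ((M.+1)%:R * (2 ^+ b - 1) + b%:R * 2 ^+ b))%Z.
  have E : p%:R *+ ((M.+1 + b) * 2 ^ (M.+1 + b).-1) - p%:R *+ (M.+1 * 2 ^ M.+1.-1)
     = (2 ^+ M * ((M.+1)%:R * (2 ^+ b - 1) + b%:R * 2 ^+ b)) * p%:Z.
    have M1 : forall (x : int) n, x *+ n = x * n%:Z by move=> x n; rewrite -mulr_natr natz.
    rewrite !M1 -!natz !natrM !natrX addSn /= exprD. ring.
  by move: H2; rewrite E PoszM dvdz_mul2r.
rewrite Gauss_dvdzr ?copz2 // rpredDl in B; last by apply: dvdz_mull.
rewrite Gauss_dvdzl ?copz2 // in B.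
by move: B; rewrite natz dvdzE !absz_nat.
Qed.

Lemma case_e1 p e b N : prime p -> odd p ->
  inI (p ^ e.+1) (p ^ 2) (u ^+ N * (u ^+ (p ^ e.+1 * b) - 1)) -> (p %| b)%N.
Proof.
move=> pp op H0.
have p1 := prime_gt1 pp; have p0 := prime_gt0 pp.
set t := (p ^ e)%N; have t0 : (0 < t)%N by rewrite expn_gt0 p0.
set n0 := (p ^ e.+1)%N; have n0t : n0 = (t * p)%N by rewrite /n0 expnSr.
have n00 : (0 < n0)%N by rewrite n0t muln_gt0 t0 p0.
set M := N.+1.
set v := u ^+ n0.
have H1 : inI n0 (p * p) (v ^+ M * (v ^+ b - 1)).
  rewrite mulnn /v -!exprM; apply: (Em_mono H0).
  by rewrite /M (leq_trans (leqnSn N)) // leq_pmull.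
set Y : {poly int} := 'X^t.
set w := 2%:R + Hs p Y.
have HH : inI n0 p (Hs p Y) by rewrite -(Hs_expl Y p1); apply: Bin.
have Hv : inI n0 (p * p) (w - v).
  have -> : w - v = - ((u ^+ t) ^+ p - (Y + 1) ^+ p) - (Y ^+ p - 1).
    rewrite /w -(Hs_expl Y p1) /v n0t exprM; ring.
  apply: inIB; first apply: inIN.
    by apply: LL => //; apply: Frob.
  by rewrite /Y -exprM -n0t -[_ - 1]mul1r; apply: inI_Phi.
have Hvw : forall k, inI n0 (p * p) (w ^+ k - v ^+ k) by move=> k; apply: inI_powB.
set P := ((2 ^ (M + b))%N%:R - (2 ^ M)%N%:R) +
   (((M + b) * 2 ^ (M + b).-1)%N%:R - (M * 2 ^ M.-1)%N%:R) * Hs p Y.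
have HP : inI n0 (p * p) P.
  have -> : P = (v ^+ M * (v ^+ b - 1)) + (w ^+ (M + b) - v ^+ (M + b))
     - (w ^+ M - v ^+ M)
     - (w ^+ (M + b) - ((2 ^ (M + b))%N%:R + ((M + b) * 2 ^ (M + b).-1)%N%:R * Hs p Y))
     + (w ^+ M - ((2 ^ M)%N%:R + (M * 2 ^ M.-1)%N%:R * Hs p Y)).
    by rewrite /P !exprD; ring.
  apply: inID; last by rewrite /w; apply: Wlem.
  apply: inIB; last by rewrite /w; apply: Wlem.
  apply: inIB; last exact: Hvw.
  by apply: inID; [exact: H1 | exact: Hvw].
have coefP : forall j, P`_j =
   ((j == 0)%N%:R *+ 2 ^ (M + b) - (j == 0)%N%:R *+ 2 ^ M) +
   ((Hs p Y)`_j *+ ((M + b) * 2 ^ (M + b).-1) - (Hs p Y)`_j *+ (M * 2 ^ M.-1)).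
  by move=> j; rewrite /P mulrBl !mulr_natl !coefD !coefN !coefMn coef1.
have SP : (size P <= n0)%N.
  apply/leq_sizeP => j jn; rewrite coefP Hs_coefbig -?n0t //.
  by rewrite (_ : (j == 0)%N = false) ?mul0rn ?subrr ?addr0 //; lia.
have C0 := inI_coef 0 n00 SP HP.
have Ct := inI_coef t n00 SP HP.
rewrite coefP Hs_coef0 // eqxx !mul0rn subrr addr0 !mulr1n in C0.
rewrite coefP Hs_coeft // (_ : (t == 0)%N = false) ?mul0rn ?subrr ?add0r in Ct; last by lia.
apply: (int_final pp op _ _ Ct) => //.
Qed.

End PG.
Import PG.

Module PH.
Local Open Scope ring_scope.

Lemma inI_horner n q f : inI n q f -> (q%:Z %| f.[1])%Z.
Proof.
move=> [d [g ->]]; rewrite natP !hornerE expr1n subrr mulr0 add0r.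
by apply: dvdz_mulr.
Qed.

Lemma pow2z b : (2 ^+ b - 1 : int) = ((2 ^ b - 1)%N)%:Z.
Proof. by rewrite -subzn ?expn_gt0 // -natz natrX. Qed.

Lemma base n p : (0 < n)%N -> prime p -> odd p -> ~ wieferich p ->
  ~ Em n (p ^ 2) (Pmn p n).
Proof.
move=> n0 pp op nw.
have p0 := prime_gt0 pp; have p1 := prime_gt1 pp.
have [n' cop En] := pfactor_coprime pp n0.
set e := logn p n in En.
have n'0 : (0 < n')%N by move: n0; rewrite En muln_gt0 => /andP [].
set s := totient n'.
have s0 : (0 < s)%N by rewrite totient_gt0.
set b := (p ^ s - 1)%N.
have ps : (1 <= p ^ s)%N by rewrite expn_gt0 p0.
have nb : (n' %| b)%N.
  by rewrite /b -eqn_mod_dvd //; apply/eqP; apply: Euler_exp_totient.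
have pb : ~~ (p %| b)%N.
  rewrite /b dvdn_subr //; last by rewrite dvdn_exp.
  by rewrite dvdn1 -(negbK (p == 1%N)) neq_ltn p1 orbT.
have Ep : Em n p (p ^ e * b).
  exists (p ^ e)%N.
  have E1 : (p ^ (e + s) = p ^ e + p ^ e * b)%N.
    by rewrite /b mulnBr muln1 -expnD subnKC // leq_pexp2l // leq_addr.
  have -> : u ^+ (p ^ e) * (u ^+ (p ^ e * b) - 1) =
     (u ^+ (p ^ (e + s)) - ('X^(p ^ (e + s)) + 1)) - (u ^+ (p ^ e) - ('X^(p ^ e) + 1))
     + ('X^(p ^ (e + s)) - 'X^(p ^ e)).
    by rewrite E1 exprD; ring.
  apply: inID; first by apply: inIB; apply: Frob.
  apply: inI_XB; first by rewrite E1 leq_addr.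
  by rewrite E1 addKn En mulnC dvdn_pmul2l ?expn_gt0 ?p0.
have [L0 SpL] := Pmn_spec p0 n0.
have Ld : (Pmn p n %| p ^ e * b)%N.
  have Qp : (0 < p ^ e * b)%N.
    by rewrite muln_gt0 expn_gt0 p0 /b subn_gt0 -{1}(expn0 p) ltn_exp2l.
  exact: (proj1 (SpL _ Qp) Ep).
move=> Hc; move/dvdnP: Ld => [t Et].
have := Em_mulQ t Hc; rewrite mulnC -Et => -[N HN].
case E : e => [|e'] in HN Et En.
  move: (inI_horner HN); rewrite expn0 mul1n !hornerE.
  rewrite (_ : 1 + 1 = 2) // pow2z => H.
  have cz : coprimez (p ^ 2)%N%:Z (2 ^+ N).
    by rewrite -natz natrX natz coprimezXl // copz2.
  rewrite Gauss_dvdzr // dvdzE !absz_nat in H.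
  apply: (nonwief pp op nw pb); apply/eqP.
  by rewrite eqn_mod_dvd ?expn_gt0.
move/negP: pb; apply; apply: (@case_e1 p e' b N pp op).
by apply: (inI_fold _ HN); rewrite En dvdn_mull.
Qed.

End PH.
Import PH.

Module PI.

Lemma up n p k : (0 < n)%N -> prime p -> (0 < k)%N ->
  Em n (p ^ k) (p ^ k.-1 * Pmn p n).
Proof.
move=> n0 pp; have p0 := prime_gt0 pp; have [L0 SpL] := Pmn_spec p0 n0.
elim: k => [//|[|k] IH] _.
  by rewrite expn0 mul1n expn1; apply/(SpL _ L0).
rewrite (_ : k.+2.-1 = k.+1) // (expnS p k) -mulnA; apply: Em_up => //; exact: IH.
Qed.

Lemma Ck n p k : (0 < n)%N -> prime p -> odd p -> ~ wieferich p -> (0 < k)%N ->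
  ~ Em n (p ^ k.+1) (p ^ k.-1 * Pmn p n).
Proof.
move=> n0 pp op nw; have p2 : (2 < p)%N.
  have := prime_gt1 pp; case: p pp op {nw} => [|[|[|p]]] //.
elim: k => [//|[|k] IH] _.
  by rewrite expn0 mul1n; apply: base.
move=> H; apply: IH => //.
apply: (@DS n p k.+1) => //; last by apply: up.
by rewrite mulnA -expnS.
Qed.

Lemma local n p k Q : (0 < n)%N -> prime p -> odd p -> ~ wieferich p ->
  (0 < k)%N -> (0 < Q)%N ->
  (Em n (p ^ k) Q <-> (p ^ k.-1 * Pmn p n %| Q)%N).
Proof.
move=> n0 pp op nw k0 Q0; have p0 := prime_gt0 pp.
have [L0 SpL] := Pmn_spec p0 n0.
split; last first.
  by move/dvdnP => [t ->]; rewrite mulnC; apply: Em_mulQ; apply: up.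
elim: k k0 => [//|[|k] IH] _.
  by rewrite expn0 mul1n expn1 => /(SpL _ Q0).
move=> H.
have HR : (p ^ k * Pmn p n %| Q)%N by apply: IH => //; apply: (Em_dvd H); rewrite dvdn_exp2l.
set R := (p ^ k * Pmn p n)%N in HR *.
have R0 : (0 < R)%N by rewrite muln_gt0 expn_gt0 p0.
have pk : (0 < p ^ k.+2)%N by rewrite expn_gt0 p0.
have [Lk0 Spk] := Pmn_spec pk n0.
case: (boolP (p * R %| Q)%N) => [|nd]; first by rewrite /R mulnA -expnS.
exfalso; apply: (Ck n0 pp op nw (isT : (0 < k.+1)%N)).
apply/(Spk _ R0).
have d1 : (Pmn (p ^ k.+2) n %| Q)%N by apply/(Spk _ Q0).
have d2 : (Pmn (p ^ k.+2) n %| p * R)%N.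
  apply/(Spk _ _); first by rewrite muln_gt0 p0.
  by rewrite /R mulnA -expnS; apply: up.
move/dvdnP: HR => [t Et].
have tp : coprime t p.
  rewrite coprime_sym prime_coprime //; apply: contra nd => /dvdnP [c Ec].
  by rewrite Et Ec -mulnA dvdn_mull.
have : (Pmn (p ^ k.+2) n %| gcdn Q (p * R))%N by rewrite dvdn_gcd d1 d2.
rewrite Et -muln_gcdl.
by rewrite (eqP tp) mul1n.
Qed.

End PI.
Import PI.


Lemma biglcm_dvd (s : seq nat) (F : nat -> nat) Q :
  (\big[lcmn/1]_(p <- s) F p %| Q) = all (fun p => F p %| Q) s.
Proof.
elim: s => [|x s IH]; first by rewrite big_nil dvd1n.
by rewrite big_cons dvdn_lcm IH.
Qed.

Lemma common_N (s : seq nat) (P : nat -> nat -> Prop) :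
  (forall p N N', P p N -> (N <= N')%N -> P p N') ->
  (forall p, p \in s -> exists N, P p N) ->
  exists N, forall p, p \in s -> P p N.
Proof.
move=> mono; elim: s => [|x s IH] H; first by exists 0%N.
have [N1 H1] := H x (mem_head x s).
have [N2 H2] : exists N, forall p, p \in s -> P p N.
  by apply: IH => p ps; apply: H; rewrite in_cons ps orbT.
exists (N1 + N2)%N => p; rewrite in_cons => /orP [/eqP ->|ps].
  by apply: (mono _ N1) => //; rewrite leq_addr.
by apply: (mono _ N2); [apply: H2 | rewrite leq_addl].
Qed.

Lemma Em_crt n m Q : (0 < n)%N -> (0 < m)%N ->
  Em n m Q <-> (forall p, p \in primes m -> Em n (p ^ logn p m) Q).
Proof.
move=> n0 m0; split.
  by move=> H p _; apply: (Em_dvd H); apply: pfactor_dvdnn.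
move=> H.
have [N HN] := @common_N (primes m)
  (fun p N => inI n (p ^ logn p m) (u ^+ N * (u ^+ Q - 1))) (fun p N N' HP le => Em_mono HP le) H.
exists N; apply/inI_md => // j.
rewrite dvdzE absz_nat; apply/(dvdn_partP _ m0) => p pm.
rewrite p_part; have := HN p pm; move/(inI_md _ _ n0)/(_ j).
by rewrite dvdzE absz_nat.
Qed.

Theorem theorem1p6 (m n : nat) :
  0 < m -> 0 < n ->
  (forall p, p \in primes m -> odd p /\ ~ wieferich p) ->
  Pmn m n = \big[lcmn/1]_(p <- primes m) (p ^ (logn p m).-1 * Pmn p n).
Proof.
move=> m0 n0 Hp.
set X := \big[lcmn/1]_(p <- primes m) _.
have X0 : 0 < X.
  rewrite /X big_seq; elim/big_rec: _ => // p y pm y0.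
  rewrite lcmn_gt0 y0 andbT muln_gt0 expn_gt0.
  have pp : prime p by move: pm; rewrite mem_primes => /andP [].
  by rewrite prime_gt0 //= (proj1 (Pmn_spec (prime_gt0 pp) n0)).
have [P0 Sp] := Pmn_spec m0 n0.
have key : forall Q, 0 < Q -> (Pmn m n %| Q) = (X %| Q).
  move=> Q Q0; apply/idP/idP.
    move/(Sp _ Q0)/(@Em_crt n m Q n0 m0) => H.
    rewrite biglcm_dvd; apply/allP => p pm.
    have pp : prime p by move: pm; rewrite mem_primes => /andP [].
    have [op nw] := Hp p pm.
    by apply/(local n0 pp op nw _ Q0); [rewrite logn_gt0 | apply: H].
  rewrite biglcm_dvd => /allP H; apply/(Sp _ Q0)/(@Em_crt n m Q n0 m0) => p pm.
  have pp : prime p by move: pm; rewrite mem_primes => /andP [].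
  have [op nw] := Hp p pm.
  by apply/(local n0 pp op nw _ Q0); [rewrite logn_gt0 | apply: H].
by apply/eqP; rewrite eqn_dvd (key _ X0) dvdnn /= -(key _ P0) dvdnn.
Qed.
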